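(* Let $p,q$ be odd positive integers with $\gcd(p,q)=1$ and $p/q-1\in(-1,1)$. Then \[ \mathcal{O}(p/q)=\{\pm A(4\ell^2/q^2):\ \ell\in\{0,1,\dots,(q-1)/2\}\} \] and \[ \mathcal{E}(p/q)=\{\pm A((2\ell+1)^2/q^2):\ \ell\in\{0,1,\dots,(q-3)/2\}\}. \]
   Context: Nodes: $x_{k,n}:=2k/n-1$, $k=0,\dots,n$; $D_n(x)=\sum_{k=0}^n(-1)^k\frac{1}{x-x_{k,n}}$. $A(y)=\sum_{k=0}^\infty(-1)^k\frac{4k+2}{(2k+1)^2-y}$ for $y\in[0,1)$. A sequence $n_j$ is a strictly increasing map $\mathbb{N}\to\mathbb{N}$, odd (even) if all $n_j$ are odd (even); $x$ is regular for $n_j$ if there is $j_0$ with $x\notin\{x_{0,n_j},\dots,x_{n_j,n_j}\}$ for $j\ge j_0$. For a rational $r$ with $x=r-1\in(-1,1)$, $\mathcal{O}(r)$ is the set of $L\in\overline{\mathbb{R}}=\mathbb{R}\cup\{\pm\infty\}$ such that $\lim_{j\to\infty}D_{n_j}(x)/n_j=L$ for some odd sequence $n_j$ for which $x$ is regular; $\mathcal{E}(r)$ is defined likewise with even sequences. *)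

(* Defs.v *)
From Stdlib Require Import Reals Lra Lia Arith.
From Coquelicot Require Import Coquelicot.
Open Scope R_scope.

Definition node (k n : nat) : R := 2 * INR k / INR n - 1.

Definition D (n : nat) (x : R) : R :=
  sum_f_R0 (fun k => (-1) ^ k / (x - node k n)) n.

Definition A (y : R) : R :=
  Series (fun k => (-1) ^ k * (4 * INR k + 2) / ((2 * INR k + 1) ^ 2 - y)).

Definition strictly_increasing (nj : nat -> nat) : Prop :=
  forall i j, (i < j)%nat -> (nj i < nj j)%nat.

Definition odd_seq (nj : nat -> nat) : Prop := forall j, Nat.Odd (nj j).
Definition even_seq (nj : nat -> nat) : Prop := forall j, Nat.Even (nj j).

Definition regular (x : R) (nj : nat -> nat) : Prop :=
  exists j0, forall j, (j0 <= j)%nat -> forall k, (k <= nj j)%nat -> x <> node k (nj j).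

Definition Oset (r : R) (L : Rbar) : Prop :=
  exists nj : nat -> nat, strictly_increasing nj /\ odd_seq nj /\ regular (r - 1) nj /\
    is_lim_seq (fun j => D (nj j) (r - 1) / INR (nj j)) L.

Definition Eset (r : R) (L : Rbar) : Prop :=
  exists nj : nat -> nat, strictly_increasing nj /\ even_seq nj /\ regular (r - 1) nj /\
    is_lim_seq (fun j => D (nj j) (r - 1) / INR (nj j)) L.

(* Main.v *)
Require Import Defs.
From Stdlib Require Import Reals Arith Lra Lia.
From Coquelicot Require Import Coquelicot.
Require Import Defs.
Open Scope R_scope.

Definition Tt (b : R) (i : nat) : R := (-1) ^ i / (2 * INR i + b).
Definition Tinf (b : R) : R := Series (Tt b).

Lemma Tt_facts (b : R) : 0 < b ->
  is_series (Tt b) (Tinf b) /\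
  forall N, Rabs (sum_f_R0 (Tt b) N - Tinf b) <= / (INR N + 1).
Proof.
  intro Hb.
  set (Un := fun i : nat => / (2 * INR i + b)).
  assert (Hpos : forall i, 0 < 2 * INR i + b).
  { intro i. pose proof (pos_INR i). lra. }
  assert (Hdec : Un_decreasing Un).
  { intro n. unfold Un. apply Rinv_le_contravar. apply Hpos.
    rewrite S_INR. lra. }
  assert (Hcv : Un_cv Un 0).
  { apply is_lim_seq_Reals.
    assert (H1 : is_lim_seq (fun i => 2 * INR i + b) p_infty).
    { apply is_lim_seq_le_p_loc with (u := INR).
      exists 0%nat. intros n _. pose proof (pos_INR n). lra.
      apply is_lim_seq_INR. }
    pose proof (is_lim_seq_inv _ _ H1) as H2.
    simpl in H2. apply H2. discriminate. }
  destruct (alternated_series Un Hdec Hcv) as [l Hl].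
  assert (Hser : is_series (Tt b) l).
  { apply is_series_Reals. exact Hl. }
  assert (HT : Tinf b = l) by (apply is_series_unique; exact Hser).
  rewrite HT. split. exact Hser.
  intro N.
  assert (Hineq := fun m => alternated_series_ineq Un l m Hdec Hcv Hl).
  assert (Hb1 : forall k, Un (S k) <= / (INR k + 1)).
  { intro k. unfold Un. apply Rinv_le_contravar.
    pose proof (pos_INR k). lra. rewrite S_INR. pose proof (pos_INR k). lra. }
  destruct (Nat.Even_or_Odd N) as [[m Hm] | [m Hm]]; subst N.
  - destruct (Hineq m) as [H1 H2].
    change (sum_f_R0 (tg_alt Un) (S (2 * m))) with
      (sum_f_R0 (tg_alt Un) (2 * m) + tg_alt Un (S (2*m))) in H1.
    change (sum_f_R0 (tg_alt Un) (2*m)) with (sum_f_R0 (Tt b) (2*m)) in H1, H2.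
    unfold tg_alt in H1. rewrite pow_1_odd in H1.
    pose proof (Hb1 (2*m)%nat).
    assert (0 <= Un (S (2*m))) by (unfold Un; left; apply Rinv_0_lt_compat, Hpos).
    rewrite Rabs_right; lra.
  - destruct (Hineq m) as [H1 H2].
    destruct (Hineq (S m)) as [H3 H4].
    replace (2 * S m)%nat with (S (2 * m + 1)) in H4 by lia.
    change (sum_f_R0 (tg_alt Un) (S (2 * m + 1))) with
      (sum_f_R0 (tg_alt Un) (2 * m + 1) + tg_alt Un (S (2*m+1))) in H4.
    replace (S (2*m+1)) with (2 * S m)%nat in H4 by lia.
    replace (S (2 * m)) with (2*m+1)%nat in H1 by lia.
    change (sum_f_R0 (tg_alt Un) (2*m+1)) with (sum_f_R0 (Tt b) (2*m+1)) in H1, H4.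
    unfold tg_alt in H4. rewrite pow_1_even in H4.
    pose proof (Hb1 (2*m+1)%nat).
    replace (2 * S m)%nat with (S (2*m+1)) in H4 by lia.
    rewrite Rabs_left1; lra.
Qed.

Lemma sum_rev (g : nat -> R) (m : nat) :
  sum_f_R0 g m = sum_f_R0 (fun i => g (m - i)%nat) m.
Proof.
  induction m as [|m IH].
  - simpl. reflexivity.
  - rewrite (decomp_sum (fun i => g (S m - i)%nat) (S m)) by lia.
    simpl pred. simpl (S m - 0)%nat.
    rewrite (sum_eq (fun i => g (S m - S i)%nat) (fun i => g (m - i)%nat)).
    2:{ intros i _. reflexivity. }
    rewrite <- IH. simpl. ring.
Qed.

Lemma neg1_sub (k i : nat) : (i <= k)%nat -> (-1) ^ (k - i) = (-1) ^ k * (-1) ^ i.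
Proof.
  intro H. replace ((-1) ^ k) with ((-1) ^ (k - i) * (-1) ^ i).
  2:{ rewrite <- pow_add. f_equal. lia. }
  rewrite Rmult_assoc, <- pow_add. replace (i + i)%nat with (2 * i)%nat by lia.
  rewrite pow_1_even. ring.
Qed.

Lemma key (p q n : nat) : (0 < q)%nat -> (0 < n)%nat -> (p < 2 * q)%nat ->
  ((p * n) mod (2 * q) <> 0)%nat ->
  D n (INR p / INR q - 1) / INR n =
  (-1) ^ ((p * n) / (2 * q)) *
   (sum_f_R0 (Tt (INR ((p * n) mod (2 * q)) / INR q)) ((p * n) / (2 * q)) +
    sum_f_R0 (Tt (2 - INR ((p * n) mod (2 * q)) / INR q)) (n - S ((p * n) / (2 * q)))).
Proof.
  intros Hq Hn Hp Hc.
  set (k0 := ((p * n) / (2 * q))%nat) in *.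
  set (c := ((p * n) mod (2 * q))%nat) in *.
  assert (Hdm : (p * n = 2 * q * k0 + c)%nat) by (apply Nat.div_mod_eq).
  assert (Hcl : (c < 2 * q)%nat) by (apply Nat.mod_upper_bound; lia).
  assert (Hk0 : (k0 < n)%nat) by nia.
  assert (Hqr : 0 < INR q) by (apply lt_0_INR; lia).
  assert (Hnr : 0 < INR n) by (apply lt_0_INR; lia).
  set (a := INR c / INR q).
  assert (Ha : 0 < a < 2).
  { unfold a. assert (0 < INR c) by (apply lt_0_INR; lia).
    assert (INR c < 2 * INR q).
    { replace 2 with (INR 2) by reflexivity. rewrite <- mult_INR. apply lt_INR. lia. }
    split. apply Rdiv_lt_0_compat; lra.
    apply Rmult_lt_reg_r with (INR q); auto. unfold Rdiv. rewrite Rmult_assoc, Rinv_l; lra. }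
  set (U := INR p * INR n / INR q).
  assert (HU : U = 2 * INR k0 + a).
  { unfold U, a. assert (H := f_equal INR Hdm).
    rewrite mult_INR, plus_INR, !mult_INR in H. simpl (INR 2) in H.
    apply Rmult_eq_reg_r with (INR q); [|lra]. field_simplify; [|lra|lra].
    lra. }
  assert (HUk : forall k, U - 2 * INR k <> 0).
  { intro k. rewrite HU. destruct (le_lt_dec k k0) as [H|H].
    - apply le_INR in H. lra.
    - assert (H0 : (S k0 <= k)%nat) by lia. apply le_INR in H0. rewrite S_INR in H0. lra. }
  set (g := fun k => (-1) ^ k / (U - 2 * INR k)).
  assert (Step1 : D n (INR p / INR q - 1) / INR n = sum_f_R0 g n).
  { unfold D, Rdiv at 1. rewrite Rmult_comm, scal_sum. apply sum_eq.
    intros k _. unfold g, node.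
    replace (INR p / INR q - 1 - (2 * INR k / INR n - 1)) with ((U - 2 * INR k) / INR n).
    2:{ unfold U. field. split; lra. }
    field. split; [apply HUk|lra]. }
  rewrite Step1, (tech2 g k0 n Hk0), sum_rev.
  rewrite (sum_eq (fun i => g (k0 - i)%nat) (fun i => Tt a i * (-1) ^ k0)).
  2:{ intros i Hi. unfold g, Tt. rewrite neg1_sub by lia. rewrite minus_INR by lia.
      rewrite HU. field. pose proof (pos_INR i). lra. }
  rewrite (sum_eq (fun i => g (S k0 + i)%nat) (fun i => Tt (2 - a) i * (-1) ^ k0)).
  2:{ intros i Hi. unfold g, Tt. rewrite pow_add. simpl ((-1) ^ S k0).
      rewrite plus_INR, S_INR, HU. pose proof (pos_INR i). field. split; lra. }
  rewrite <- !scal_sum. ring.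
Qed.

Lemma A_split (a : R) : 0 < a < 2 -> A ((1 - a) ^ 2) = Tinf a + Tinf (2 - a).
Proof.
  intro Ha. destruct (Tt_facts a) as [H1 _]; [lra|].
  destruct (Tt_facts (2 - a)) as [H2 _]; [lra|].
  unfold Tinf at 1 2. rewrite <- Series_plus by (eexists; eassumption).
  unfold A. apply Series_ext. intro k. unfold Tt.
  pose proof (pos_INR k).
  replace ((2 * INR k + 1) ^ 2 - (1 - a) ^ 2) with ((2 * INR k + a) * (2 * INR k + (2 - a))) by ring.
  field. split; lra.
Qed.

Definition W (p q n : nat) : R :=
  (-1) ^ ((p * n) / (2 * q)) * A ((1 - INR ((p * n) mod (2 * q)) / INR q) ^ 2).

Lemma inv_le_div (X Y Z : R) : 0 < X -> 0 < Z -> Z <= Y * X -> / X <= Y / Z.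
Proof.
  intros HX HZ H.
  replace (/ X) with (Z * / (X * Z)) by (field; lra).
  replace (Y / Z) with (Y * X * / (X * Z)) by (field; lra).
  apply Rmult_le_compat_r; [left; apply Rinv_0_lt_compat; nra | exact H].
Qed.

Lemma approx (p q n : nat) : (0 < p)%nat -> (0 < q)%nat -> (0 < n)%nat -> (p < 2 * q)%nat ->
  ((p * n) mod (2 * q) <> 0)%nat ->
  Rabs (D n (INR p / INR q - 1) / INR n - W p q n) <= 4 * INR q / INR n.
Proof.
  intros Hp0 Hq Hn Hp Hc.
  rewrite key by assumption. unfold W.
  set (k0 := ((p * n) / (2 * q))%nat) in *.
  set (c := ((p * n) mod (2 * q))%nat) in *.
  assert (Hdm : (p * n = 2 * q * k0 + c)%nat) by (apply Nat.div_mod_eq).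
  assert (Hcl : (c < 2 * q)%nat) by (apply Nat.mod_upper_bound; lia).
  assert (Hk0 : (k0 < n)%nat) by nia.
  assert (Hqr : 0 < INR q) by (apply lt_0_INR; lia).
  assert (Hnr : 0 < INR n) by (apply lt_0_INR; lia).
  set (a := INR c / INR q).
  assert (Ha : 0 < a < 2).
  { unfold a. assert (0 < INR c) by (apply lt_0_INR; lia).
    assert (INR c < 2 * INR q).
    { replace 2 with (INR 2) by reflexivity. rewrite <- mult_INR. apply lt_INR. lia. }
    split. apply Rdiv_lt_0_compat; lra.
    apply Rmult_lt_reg_r with (INR q); auto. unfold Rdiv. rewrite Rmult_assoc, Rinv_l; lra. }
  rewrite A_split by exact Ha.
  destruct (Tt_facts a) as [_ B1]; [lra|].
  destruct (Tt_facts (2 - a)) as [_ B2]; [lra|].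
  specialize (B1 k0). specialize (B2 (n - S k0)%nat).
  replace ((-1) ^ k0 * (sum_f_R0 (Tt a) k0 + sum_f_R0 (Tt (2 - a)) (n - S k0)) -
           (-1) ^ k0 * (Tinf a + Tinf (2 - a)))
    with ((-1) ^ k0 * ((sum_f_R0 (Tt a) k0 - Tinf a) + (sum_f_R0 (Tt (2 - a)) (n - S k0) - Tinf (2 - a)))) by ring.
  rewrite Rabs_mult, pow_1_abs, Rmult_1_l.
  eapply Rle_trans; [apply Rabs_triang|].
  assert (E1 : / (INR k0 + 1) <= 2 * INR q / INR n).
  { apply inv_le_div. pose proof (pos_INR k0); lra. exact Hnr.
    assert (H : (n <= 2 * q * (k0 + 1))%nat) by nia.
    apply le_INR in H. rewrite !mult_INR, plus_INR in H. simpl (INR 2) in H. simpl (INR 1) in H. lra. }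
  assert (E2 : / (INR (n - S k0) + 1) <= 2 * INR q / INR n).
  { apply inv_le_div. pose proof (pos_INR (n - S k0)); lra. exact Hnr.
    assert (H : (n <= 2 * q * (n - S k0 + 1))%nat).
    { replace (n - S k0 + 1)%nat with (n - k0)%nat by lia. 
      assert (2 * q * k0 <= (2 * q - 1) * n)%nat by nia.
      rewrite Nat.mul_sub_distr_l. rewrite Nat.mul_sub_distr_r in H. nia. }
    apply le_INR in H. rewrite !mult_INR, plus_INR in H. simpl (INR 2) in H. simpl (INR 1) in H. lra. }
  replace (4 * INR q / INR n) with (2 * INR q / INR n + 2 * INR q / INR n) by (field; lra).
  lra.
Qed.

Lemma reg_a (p q n : nat) : (0 < q)%nat -> (0 < n)%nat ->
  ((p * n) mod (2 * q) <> 0)%nat -> forall k, INR p / INR q - 1 <> node k n.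
Proof.
  intros Hq Hn Hc k E. apply Hc. unfold node in E.
  assert (Hqr : 0 < INR q) by (apply lt_0_INR; lia).
  assert (Hnr : 0 < INR n) by (apply lt_0_INR; lia).
  assert (E2 : INR (p * n) = INR (k * (2 * q))).
  { rewrite !mult_INR. simpl (INR 2).
    assert (INR p / INR q = 2 * INR k / INR n) by lra.
    assert (H1 : INR p * INR n = (INR p / INR q) * INR q * INR n) by (field; lra).
    rewrite H1, H. field. lra. }
  apply INR_eq in E2. rewrite E2. apply Nat.Div0.mod_mul.
Qed.

Lemma reg_b (p q n : nat) : (0 < q)%nat -> (0 < n)%nat -> (p < 2 * q)%nat ->
  (forall k, (k <= n)%nat -> INR p / INR q - 1 <> node k n) ->
  ((p * n) mod (2 * q) <> 0)%nat.
Proof.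
  intros Hq Hn Hp H Hc.
  assert (Hdm : (p * n = 2 * q * ((p * n) / (2 * q)) + (p * n) mod (2 * q))%nat) by (apply Nat.div_mod_eq).
  rewrite Hc in Hdm. set (k0 := ((p * n) / (2 * q))%nat) in *.
  assert (Hk0 : (k0 <= n)%nat) by nia.
  apply (H k0 Hk0). unfold node.
  assert (Hqr : 0 < INR q) by (apply lt_0_INR; lia).
  assert (Hnr : 0 < INR n) by (apply lt_0_INR; lia).
  assert (E := f_equal INR Hdm). rewrite !mult_INR, plus_INR, mult_INR in E.
  simpl (INR 2) in E. simpl (INR 0) in E.
  apply Rplus_eq_reg_r with 1. apply Rmult_eq_reg_r with (INR q * INR n); [|nra].
  field_simplify; try lra. rewrite E, mult_INR. simpl (INR 2). ring.
Qed.

Lemma incr_ge (nj : nat -> nat) : strictly_increasing nj -> forall j, (j <= nj j)%nat.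
Proof.
  intros H j. induction j. lia. specialize (H j (S j) (Nat.lt_succ_diag_r j)). lia.
Qed.

Lemma lim_approx (p q : nat) (nj : nat -> nat) (j0 : nat) :
  (0 < p)%nat -> (0 < q)%nat -> (p < 2 * q)%nat -> strictly_increasing nj ->
  (forall j, (j0 <= j)%nat -> ((p * nj j) mod (2 * q) <> 0)%nat) ->
  is_lim_seq (fun j => D (nj j) (INR p / INR q - 1) / INR (nj j) - W p q (nj j)) 0.
Proof.
  intros Hp0 Hq Hp Hinc Hreg.
  assert (Hinf : is_lim_seq (fun j => INR (nj j)) p_infty).
  { apply is_lim_seq_le_p_loc with (u := INR). exists 0%nat. intros n _.
    apply le_INR, incr_ge, Hinc. apply is_lim_seq_INR. }
  assert (H0 : is_lim_seq (fun j => 4 * INR q * / INR (nj j)) 0).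
  { pose proof (is_lim_seq_inv _ _ Hinf) as Hi. simpl in Hi.
    specialize (Hi ltac:(discriminate)).
    pose proof (is_lim_seq_scal_l _ (4 * INR q) _ Hi) as Hs. simpl in Hs.
    rewrite Rmult_0_r in Hs. exact Hs. }
  apply is_lim_seq_le_le_loc with (u := fun j => - (4 * INR q * / INR (nj j)))
                                  (w := fun j => 4 * INR q * / INR (nj j)).
  - exists (max j0 1). intros j Hj.
    assert (Hn : (0 < nj j)%nat) by (pose proof (incr_ge nj Hinc j); lia).
    pose proof (approx p q (nj j) Hp0 Hq Hn Hp (Hreg j ltac:(lia))) as Ha.
    apply Rabs_le_between in Ha. unfold Rdiv in Ha. lra.
  - pose proof (proj1 (is_lim_seq_opp _ _) H0) as H1. simpl in H1. rewrite Ropp_0 in H1. exact H1.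
  - exact H0.
Qed.

Lemma bound_fin (F : nat -> R) (N : nat) : exists M, forall k, (k <= N)%nat -> Rabs (F k) <= M.
Proof.
  induction N as [|N [M HM]].
  - exists (Rabs (F 0%nat)). intros k Hk. replace k with 0%nat by lia. lra.
  - exists (Rmax M (Rabs (F (S N)))). intros k Hk.
    destruct (Nat.eq_dec k (S N)) as [->|Hne]. apply Rmax_r.
    eapply Rle_trans; [apply HM; lia| apply Rmax_l].
Qed.

Lemma delta_fin (F : nat -> R) (N : nat) (l : R) :
  exists d, 0 < d /\ forall k, (k <= N)%nat -> F k <> l -> d <= Rabs (F k - l).
Proof.
  induction N as [|N [d [Hd HM]]].
  - destruct (Req_dec (F 0%nat) l) as [E|E].
    + exists 1. split. lra. intros k Hk Hne. replace k with 0%nat in Hne by lia. congruence.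
    + exists (Rabs (F 0%nat - l)). split. apply Rabs_pos_lt. lra.
      intros k Hk _. replace k with 0%nat by lia. lra.
  - destruct (Req_dec (F (S N)) l) as [E|E].
    + exists d. split. exact Hd. intros k Hk Hne.
      destruct (Nat.eq_dec k (S N)) as [->|Hk']. congruence. apply HM; [lia|exact Hne].
    + exists (Rmin d (Rabs (F (S N) - l))). split.
      apply Rmin_glb_lt. exact Hd. apply Rabs_pos_lt. lra.
      intros k Hk Hne. destruct (Nat.eq_dec k (S N)) as [->|Hk']. apply Rmin_r.
      eapply Rle_trans; [apply Rmin_l| apply HM; [lia|exact Hne]].
Qed.

Lemma fin_lim (F : nat -> R) (N : nat) (idx : nat -> nat) (L : Rbar) :
  (forall j, (idx j <= N)%nat) -> is_lim_seq (fun j => F (idx j)) L ->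
  forall j0, exists j, (j0 <= j)%nat /\ L = Finite (F (idx j)).
Proof.
  intros Hidx Hl j0. apply is_lim_seq_spec in Hl.
  destruct (bound_fin F N) as [M HM].
  destruct L as [l| |]; simpl in Hl.
  - destruct (delta_fin F N l) as [d [Hd Hdel]].
    destruct (Hl (mkposreal d Hd)) as [N1 HN1]. simpl in HN1.
    exists (max j0 N1). split. lia.
    specialize (HN1 (max j0 N1) ltac:(lia)).
    destruct (Req_dec (F (idx (max j0 N1))) l) as [E|E]. rewrite E; reflexivity.
    specialize (Hdel _ (Hidx _) E). lra.
  - destruct (Hl M) as [N1 HN1]. specialize (HN1 N1 (le_n _)).
    specialize (HM _ (Hidx N1)). apply Rabs_le_between in HM. lra.
  - destruct (Hl (- M)) as [N1 HN1]. specialize (HN1 N1 (le_n _)).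
    specialize (HM _ (Hidx N1)). apply Rabs_le_between in HM. lra.
Qed.

Lemma neg1_cases (k : nat) : (-1) ^ k = 1 \/ (-1) ^ k = -1.
Proof.
  induction k as [|k [H|H]]; simpl. left; ring. right; rewrite H; ring. left; rewrite H; ring.
Qed.

Lemma neg1_2add (X Y : nat) : (-1) ^ (2 * X + Y) = (-1) ^ Y.
Proof. rewrite pow_add, pow_1_even. ring. Qed.

Definition Fv (q i : nat) : R := (-1) ^ (i mod 2) * A ((1 - INR (i / 2) / INR q) ^ 2).

Lemma W_F (p q n : nat) : (0 < q)%nat ->
  W p q n = Fv q (2 * ((p * n) mod (2 * q)) + ((p * n) / (2 * q)) mod 2).
Proof.
  intro Hq. unfold W, Fv.
  set (k0 := ((p * n) / (2 * q))%nat). set (c := ((p * n) mod (2 * q))%nat).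
  assert (Hr : (k0 mod 2 < 2)%nat) by (apply Nat.mod_upper_bound; lia).
  assert (E1 : ((2 * c + k0 mod 2) / 2 = c)%nat).
  { symmetry. apply (Nat.div_unique _ _ _ (k0 mod 2)); lia. }
  assert (E2 : ((2 * c + k0 mod 2) mod 2 = k0 mod 2)%nat).
  { symmetry. apply (Nat.mod_unique _ _ c); lia. }
  rewrite E1, E2. f_equal.
  rewrite (Nat.div_mod_eq k0 2) at 1. apply neg1_2add.
Qed.

Lemma forward (p q : nat) (nj : nat -> nat) (L : Rbar) :
  (0 < p)%nat -> (0 < q)%nat -> (p < 2 * q)%nat -> strictly_increasing nj ->
  regular (INR p / INR q - 1) nj ->
  is_lim_seq (fun j => D (nj j) (INR p / INR q - 1) / INR (nj j)) L ->
  exists j, (0 < nj j)%nat /\ ((p * nj j) mod (2 * q) <> 0)%nat /\ L = Finite (W p q (nj j)).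
Proof.
  intros Hp0 Hq Hp Hinc [j0 Hj0] Hl.
  assert (Hreg : forall j, (max j0 1 <= j)%nat -> ((p * nj j) mod (2 * q) <> 0)%nat).
  { intros j Hj. pose proof (incr_ge nj Hinc j).
    apply reg_b; try lia. apply Hj0. lia. }
  pose proof (lim_approx p q nj (max j0 1) Hp0 Hq Hp Hinc Hreg) as Hd.
  assert (HW : is_lim_seq (fun j => W p q (nj j)) L).
  { pose proof (proj1 (is_lim_seq_opp _ _) Hd) as Hd'. simpl in Hd'. rewrite Ropp_0 in Hd'.
    eapply is_lim_seq_ext.
    2:{ eapply is_lim_seq_plus. exact Hl. exact Hd'.
        destruct L; unfold is_Rbar_plus; simpl; try rewrite Rplus_0_r; reflexivity. }
    intro j. simpl. ring. }
  set (idx := fun j => (2 * ((p * nj j) mod (2 * q)) + ((p * nj j) / (2 * q)) mod 2)%nat).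
  assert (Hidx : forall j, (idx j <= 4 * q)%nat).
  { intro j. unfold idx.
    assert (((p * nj j) mod (2 * q) < 2 * q)%nat) by (apply Nat.mod_upper_bound; lia).
    assert (((p * nj j) / (2 * q)) mod 2 < 2)%nat by (apply Nat.mod_upper_bound; lia).
    lia. }
  assert (HW' : is_lim_seq (fun j => Fv q (idx j)) L).
  { eapply is_lim_seq_ext; [|exact HW]. intro j. unfold idx. apply W_F. exact Hq. }
  destruct (fin_lim (Fv q) (4 * q) idx L Hidx HW' (max j0 1)) as [j [Hj EL]].
  exists j. pose proof (incr_ge nj Hinc j).
  split. lia. split. apply Hreg. lia.
  rewrite EL. unfold idx. rewrite <- W_F by exact Hq. reflexivity.
Qed.

Lemma odd_l (p q n : nat) : Nat.Odd p -> Nat.Odd q -> Nat.Odd n ->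
  exists l, (2 * l + 1 <= q)%nat /\
    (1 - INR ((p * n) mod (2 * q)) / INR q) ^ 2 = 4 * INR l ^ 2 / INR q ^ 2.
Proof.
  intros [a Ha] [t Ht] [b Hb].
  assert (Hq : (0 < q)%nat) by lia.
  assert (Hdm : (p * n = 2 * q * ((p * n) / (2 * q)) + (p * n) mod (2 * q))%nat) by (apply Nat.div_mod_eq).
  assert (Hcl : ((p * n) mod (2 * q) < 2 * q)%nat) by (apply Nat.mod_upper_bound; lia).
  set (k0 := ((p * n) / (2 * q))%nat) in *.
  set (c := ((p * n) mod (2 * q))%nat) in *.
  assert (Hqr : 0 < INR q) by (apply lt_0_INR; lia).
  destruct (Nat.Even_or_Odd c) as [[e He]|[e He]].
  { exfalso. subst p n. lia. }
  destruct (le_lt_dec e t) as [Het|Het].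
  - exists (t - e)%nat. split. lia.
    assert (E : (q = c + 2 * (t - e))%nat) by lia.
    apply (f_equal INR) in E. rewrite plus_INR, mult_INR in E. simpl (INR 2) in E.
    rewrite E. field. lra.
  - exists (e - t)%nat. split. lia.
    assert (E : (c = q + 2 * (e - t))%nat) by lia.
    apply (f_equal INR) in E. rewrite plus_INR, mult_INR in E. simpl (INR 2) in E.
    rewrite E. field. lra.
Qed.

Lemma even_l (p q n : nat) : Nat.Odd p -> Nat.Odd q -> Nat.Even n ->
  ((p * n) mod (2 * q) <> 0)%nat ->
  exists l, (2 * l + 3 <= q)%nat /\
    (1 - INR ((p * n) mod (2 * q)) / INR q) ^ 2 = (2 * INR l + 1) ^ 2 / INR q ^ 2.
Proof.
  intros [a Ha] [t Ht] [b Hb] Hc0.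
  assert (Hq : (0 < q)%nat) by lia.
  assert (Hdm : (p * n = 2 * q * ((p * n) / (2 * q)) + (p * n) mod (2 * q))%nat) by (apply Nat.div_mod_eq).
  assert (Hcl : ((p * n) mod (2 * q) < 2 * q)%nat) by (apply Nat.mod_upper_bound; lia).
  set (k0 := ((p * n) / (2 * q))%nat) in *.
  set (c := ((p * n) mod (2 * q))%nat) in *.
  assert (Hqr : 0 < INR q) by (apply lt_0_INR; lia).
  destruct (Nat.Even_or_Odd c) as [[e He]|[e He]].
  2:{ exfalso. subst p n. lia. }
  destruct (le_lt_dec e t) as [Het|Het].
  - exists (t - e)%nat. split. lia.
    assert (E : (q = c + 2 * (t - e) + 1)%nat) by lia.
    apply (f_equal INR) in E. rewrite !plus_INR, mult_INR in E. simpl (INR 2) in E. simpl (INR 1) in E.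
    rewrite E. field. lra.
  - exists (e - t - 1)%nat. split. lia.
    assert (E : (c = q + 2 * (e - t - 1) + 1)%nat) by lia.
    apply (f_equal INR) in E. rewrite !plus_INR, mult_INR in E. simpl (INR 2) in E. simpl (INR 1) in E.
    rewrite E. field. lra.
Qed.

Lemma backward (p q c : nat) (sg : R) :
  (0 < p)%nat -> (0 < q)%nat -> (p < 2 * q)%nat -> Nat.Odd p -> Nat.gcd p q = 1%nat ->
  (0 < c)%nat -> (c < 2 * q)%nat -> (sg = 1 \/ sg = -1) ->
  exists nj : nat -> nat, strictly_increasing nj /\ (Nat.Odd c -> odd_seq nj) /\
    (Nat.Even c -> even_seq nj) /\ regular (INR p / INR q - 1) nj /\
    is_lim_seq (fun j => D (nj j) (INR p / INR q - 1) / INR (nj j))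
      (sg * A ((1 - INR c / INR q) ^ 2)).
Proof.
  intros Hp0 Hq Hp [a Ha] Hg Hc0 Hc Hsg.
  destruct (Nat.gcd_bezout_pos p q Hp0) as [u [v Huv]]. rewrite Hg in Huv.
  assert (Hb : exists u' w, (u' * p = 1 + w * (2 * q))%nat).
  { destruct (Nat.Even_or_Odd v) as [[w Hw]|[w Hw]].
    - exists u, w. subst v. lia.
    - exists (u + q)%nat, (w + a + 1)%nat. subst v p. nia. }
  destruct Hb as [u' [w Huw]].
  assert (He : exists e, (e <= 1)%nat /\ (-1) ^ (c * w + e) = sg).
  { destruct (neg1_cases (c * w)) as [H|H]; destruct Hsg as [->| ->].
    - exists 0%nat. rewrite Nat.add_0_r. split; auto.
    - exists 1%nat. rewrite pow_add, H. split; auto. simpl; ring.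
    - exists 1%nat. rewrite pow_add, H. split; auto. simpl; ring.
    - exists 0%nat. rewrite Nat.add_0_r. split; auto. }
  destruct He as [e [He1 He]].
  set (n0 := (u' * c)%nat).
  assert (Hn0 : (p * n0 = c + c * w * (2 * q))%nat) by (unfold n0; nia).
  set (nj := fun j : nat => (n0 + 2 * q * (2 * j + 2 + e))%nat).
  assert (Hpn : forall j, (p * nj j = 2 * q * (c * w + p * (2 * j + 2 + e)) + c)%nat).
  { intro j. unfold nj. nia. }
  assert (Hmod : forall j, ((p * nj j) mod (2 * q) = c)%nat).
  { intro j. symmetry. apply (Nat.mod_unique _ _ (c * w + p * (2 * j + 2 + e))); auto. }
  assert (Hdiv : forall j, ((p * nj j) / (2 * q) = c * w + p * (2 * j + 2 + e))%nat).
  { intro j. symmetry. apply (Nat.div_unique _ _ _ c); auto. }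
  assert (HW : forall j, W p q (nj j) = sg * A ((1 - INR c / INR q) ^ 2)).
  { intro j. unfold W. rewrite Hmod, Hdiv. f_equal. rewrite <- He.
    replace (c * w + p * (2 * j + 2 + e))%nat with
      (2 * (a * (2 * j + 2 + e) + j + 1) + (c * w + e))%nat by (subst p; nia).
    apply neg1_2add. }
  assert (Hpos : forall j, (0 < nj j)%nat) by (intro j; unfold nj; nia).
  exists nj. split; [|split; [|split; [|split]]].
  - intros i j Hij. unfold nj. nia.
  - intros [m Hm] j. destruct (Nat.Even_or_Odd n0) as [[b Hb]|[b Hb]].
    + exfalso. rewrite Hb in Hn0. subst c. lia.
    + exists (b + q * (2 * j + 2 + e))%nat. unfold nj. lia.
  - intros [m Hm] j. destruct (Nat.Even_or_Odd n0) as [[b Hb]|[b Hb]].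
    + exists (b + q * (2 * j + 2 + e))%nat. unfold nj. lia.
    + exfalso. rewrite Hb in Hn0. subst c p. lia.
  - exists 0%nat. intros j _ k _. apply reg_a; auto. rewrite Hmod. lia.
  - assert (Hreg : forall j, (0 <= j)%nat -> ((p * nj j) mod (2 * q) <> 0)%nat).
    { intros j _. rewrite Hmod. lia. }
    assert (Hinc : strictly_increasing nj) by (intros i j Hij; unfold nj; nia).
    pose proof (lim_approx p q nj 0 Hp0 Hq Hp Hinc Hreg) as Hd.
    pose proof (is_lim_seq_plus' _ _ _ _ Hd (is_lim_seq_const (sg * A ((1 - INR c / INR q) ^ 2)))) as H.
    rewrite Rplus_0_l in H. eapply is_lim_seq_ext; [|exact H].
    intro j. cbv beta. rewrite (HW j). ring.
Qed.

Theorem corollary3 (p q : nat) :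
  Nat.Odd p -> Nat.Odd q -> (0 < p)%nat -> (0 < q)%nat -> Nat.gcd p q = 1%nat ->
  -1 < INR p / INR q - 1 < 1 ->
  (forall L : Rbar, Oset (INR p / INR q) L <->
     exists l : nat, (2 * l + 1 <= q)%nat /\
       (L = Finite (A (4 * INR l ^ 2 / INR q ^ 2)) \/
        L = Finite (- A (4 * INR l ^ 2 / INR q ^ 2)))) /\
  (forall L : Rbar, Eset (INR p / INR q) L <->
     exists l : nat, (2 * l + 3 <= q)%nat /\
       (L = Finite (A ((2 * INR l + 1) ^ 2 / INR q ^ 2)) \/
        L = Finite (- A ((2 * INR l + 1) ^ 2 / INR q ^ 2)))).
Proof.
  intros Hpo Hqo Hp0 Hq0 Hg Hx.
  assert (Hqr : 0 < INR q) by (apply lt_0_INR; lia).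
  assert (Hp : (p < 2 * q)%nat).
  { apply INR_lt. rewrite mult_INR. simpl (INR 2).
    destruct Hx as [_ Hx]. apply Rmult_lt_reg_r with (/ INR q).
    apply Rinv_0_lt_compat; lra.
    replace (INR p * / INR q) with (INR p / INR q) by reflexivity.
    replace ((1 + 1) * INR q * / INR q) with 2 by (field; lra). lra. }
  split; intro L; split.
  - intros [nj [Hinc [Hodd [Hreg Hl]]]].
    destruct (forward p q nj L Hp0 Hq0 Hp Hinc Hreg Hl) as [j [Hn [Hc EL]]].
    destruct (odd_l p q (nj j) Hpo Hqo (Hodd j)) as [l [Hl2 Eq]].
    exists l. split; auto. unfold W in EL. rewrite Eq in EL.
    destruct (neg1_cases ((p * nj j) / (2 * q))) as [E|E]; rewrite E in EL;
      [left|right]; rewrite EL; f_equal; ring.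
  - intros [l [Hl EL]].
    assert (HA : (1 - INR (q - 2 * l) / INR q) ^ 2 = 4 * INR l ^ 2 / INR q ^ 2).
    { rewrite minus_INR by lia. rewrite mult_INR. simpl (INR 2). field. lra. }
    assert (Hsg : exists sg, (sg = 1 \/ sg = -1) /\ L = Finite (sg * A (4 * INR l ^ 2 / INR q ^ 2))).
    { destruct EL as [EL|EL]; [exists 1|exists (-1)]; (split; [auto|rewrite EL; f_equal; ring]). }
    destruct Hsg as [sg [Hsg EL']].
    destruct (backward p q (q - 2 * l) sg Hp0 Hq0 Hp Hpo Hg ltac:(lia) ltac:(lia) Hsg)
      as [nj [Hinc [Ho [_ [Hreg Hlim]]]]].
    exists nj. split; auto. split.
    + apply Ho. destruct Hqo as [t Ht]. exists (t - l)%nat. lia.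
    + split; auto. rewrite EL', <- HA. exact Hlim.
  - intros [nj [Hinc [Hev [Hreg Hl]]]].
    destruct (forward p q nj L Hp0 Hq0 Hp Hinc Hreg Hl) as [j [Hn [Hc EL]]].
    destruct (even_l p q (nj j) Hpo Hqo (Hev j) Hc) as [l [Hl2 Eq]].
    exists l. split; auto. unfold W in EL. rewrite Eq in EL.
    destruct (neg1_cases ((p * nj j) / (2 * q))) as [E|E]; rewrite E in EL;
      [left|right]; rewrite EL; f_equal; ring.
  - intros [l [Hl EL]].
    assert (HA : (1 - INR (q - 2 * l - 1) / INR q) ^ 2 = (2 * INR l + 1) ^ 2 / INR q ^ 2).
    { rewrite !minus_INR by lia. rewrite mult_INR. simpl (INR 2). simpl (INR 1). field. lra. }
    assert (Hsg : exists sg, (sg = 1 \/ sg = -1) /\ L = Finite (sg * A ((2 * INR l + 1) ^ 2 / INR q ^ 2))).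
    { destruct EL as [EL|EL]; [exists 1|exists (-1)]; (split; [auto|rewrite EL; f_equal; ring]). }
    destruct Hsg as [sg [Hsg EL']].
    destruct (backward p q (q - 2 * l - 1) sg Hp0 Hq0 Hp Hpo Hg ltac:(lia) ltac:(lia) Hsg)
      as [nj [Hinc [_ [He [Hreg Hlim]]]]].
    exists nj. split; auto. split.
    + apply He. destruct Hqo as [t Ht]. exists (t - l)%nat. lia.
    + split; auto. rewrite EL', <- HA. exact Hlim.
Qed.
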